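(* Let $r\ge 2$, let $x_1,\dots,x_{r-1},t\in\mathbb{C}$, and let $G$ be a finite graph (loops and multiple edges allowed) with $n$ vertices, each of degree at least $1$. Let $V=\mathbb{C}^r$, $B=I_r$ (so $B_{ij}=\delta_{ij}$), and let $\mathcal{A}=\{A_1,A_2,\dots\}$ be the symmetric tensors with components $A_1^i=t$ if $i=r$ and $A_1^i=0$ if $i\neq r$, and for $d\ge 2$ $$A_d^{i_1\dots i_d}=\begin{cases} x_i & \text{if } (i_1,\dots,i_d) \text{ is a permutation of } (i,i,r,\dots,r) \text{ for some } i\in\{1,\dots,r-1\},\\ t & \text{if } (i_1,\dots,i_d)=(r,\dots,r),\\ 0&\text{otherwise.}\end{cases}$$ Then $$\mathcal{F}_{\mathcal{A},I_r}(G)=\sum_{|\lambda|\le n} t^{\,n-|\lambda|}\,p_\lambda(x_1,\dots,x_{r-1})\,N_\lambda(G),$$ the sum being over all partitions $\lambda$ (including the empty partition) of weight $|\lambda|\le n$.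
   Context: Graph function: for $G$ with vertices $v_1,\dots,v_n$ of degrees $d_1,\dots,d_n$ and set of half-edges $H$ (each edge, including a loop, consists of two half-edges), $\mathcal{F}_{\mathcal{A},B}(G)=\sum_{c:H\to\{1,\dots,r\}}\prod_{\{h,h'\}\in E(G)}B_{c(h)c(h')}\prod_{k=1}^n A_{d_k}^{c(h_{k,1})\dots c(h_{k,d_k})}$, where $h_{k,1},\dots,h_{k,d_k}$ are the half-edges at $v_k$; i.e. a copy of $A_{d_k}$ is placed at each vertex and contracted along every edge with $B$. A (multi)cycle of $G$ is a $2$-valent subgraph $C$ (every vertex of $C$ has degree $2$ in $C$, loops counted twice; $C$ need not be connected; the empty subgraph is allowed). Its length $|C|$ is its number of edges; if $C_1,\dots,C_l$ are its connected components, its type is the partition $\lambda_C=[|C_1|,\dots,|C_l|]$ of $|C|$. $N_\lambda(G)$ is the number of cycles of $G$ of type $\lambda$. For $k\ge1$, $p_k(x_1,\dots,x_{r-1})=\sum_i x_i^k$, and for a partition $\lambda=[k_1,\dots,k_l]$, $p_\lambda=\prod_{j=1}^l p_{k_j}$ (with $p_\emptyset=1$); $|\lambda|=k_1+\dots+k_l$. *)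

(* Defs.v *)
From HB Require Import structures.
From mathcomp Require Import all_boot all_order all_algebra.
From mathcomp Require Import reals.
From mathcomp Require Export complex.
Set Implicit Arguments. Unset Strict Implicit. Unset Printing Implicit Defensive.
Import Order.TTheory GRing.Theory Num.Theory.
Local Open Scope ring_scope.

(* A finite multigraph (loops and multiple edges allowed) with vertex set 'I_n
   is given by a finite type H of half-edges, an incidence map vert : H -> 'I_n
   and a fixed-point-free involution mate : H -> H pairing half-edges into edges
   (an edge {h, mate h} is a loop iff vert h = vert (mate h)). *)

Section Graph.
Variables (n : nat) (H : finType) (vert : H -> 'I_n) (mate : H -> H).

Definition halfedges_at (v : 'I_n) : seq H := enum [pred h | vert h == v].
Definition degree (v : 'I_n) : nat := size (halfedges_at v).

Definition edge_rep (h : H) : bool := (enum_rank h < enum_rank (mate h))%N.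

(* The graph function F_{A,B}(G); A s = A_d^{s_1 ... s_d} with d = size s. *)
Definition graphF (C : nzRingType) (r : nat) (A : seq 'I_r -> C)
  (B : 'I_r -> 'I_r -> C) : C :=
  \sum_(c : {ffun H -> 'I_r})
     ((\prod_(h | edge_rep h) B (c h) (c (mate h))) *
      \prod_(v : 'I_n) A (map c (halfedges_at v))).

(* A subgraph is a set of edges, i.e. a mate-closed set S of half-edges. *)
Definition mate_closed (S : {set H}) : bool := [forall h in S, mate h \in S].

(* degree of v in the subgraph S (loops counted twice) *)
Definition sub_degree (S : {set H}) (v : 'I_n) : nat :=
  #|[set h in S | vert h == v]|.

Definition is_cycle (S : {set H}) : bool :=
  mate_closed S && [forall v, (sub_degree S v == 0%N) || (sub_degree S v == 2%N)].

Definition sub_rel (S : {set H}) : rel H :=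
  fun h h' => [&& h \in S, h' \in S & (mate h == h') || (vert h == vert h')].

Definition components (S : {set H}) : {set {set H}} :=
  [set [set h' in S | connect (sub_rel S) h h'] | h in S].

(* type of S: the partition (nonincreasing list) of the numbers of edges of
   its connected components *)
Definition cycle_type (S : {set H}) : seq nat :=
  sort geq [seq (#|K| %/ 2)%N | K : {set H} <- enum (components S)].

Definition N_type (lam : seq nat) : nat :=
  #|[set S : {set H} | is_cycle S & cycle_type S == lam]|.

End Graph.

(* Partitions of weight <= n are encoded as n-tuples of numbers in [0, n],
   nonincreasing, with sum <= n: the partition is the list of nonzero entries
   (zeros are padding).  This is a bijection. *)
Definition padded_partition (n : nat) (t : n.-tuple 'I_n.+1) : bool :=
  sorted geq [seq val i | i <- t] && (sumn [seq val i | i <- t] <= n)%N.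

Definition part_of (n : nat) (t : n.-tuple 'I_n.+1) : seq nat :=
  [seq k <- [seq val i | i <- t] | k != 0%N].

Definition psum (C : nzRingType) (m : nat) (x : 'I_m -> C) (k : nat) : C :=
  \sum_(i < m) x i ^+ k.
Definition pprod (C : nzRingType) (m : nat) (x : 'I_m -> C) (lam : seq nat) : C :=
  \prod_(k <- lam) psum x k.

(* Colours are 'I_r; colour number r of the
   paper is the one with value r.-1, and colour i+1 of the paper (i < r-1)
   is the one with value i, carrying the variable x i. *)
Definition tensorA (C : nzRingType) (r : nat) (x : 'I_r.-1 -> C) (t : C)
  (s : seq 'I_r) : C :=
  if all (fun c : 'I_r => val c == r.-1) s then t
  else match [pick i : 'I_r.-1 |
                perm_eq [seq val c | c <- s]
                        (val i :: val i :: nseq (size s - 2) r.-1)] with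
       | Some i => x i
       | None => 0
       end.

(* Main.v *)
Require Import Defs.
From HB Require Import structures.
From mathcomp Require Import all_boot all_order all_algebra.
Import GRing.Theory Num.Theory.
Set Implicit Arguments. Unset Strict Implicit. Unset Printing Implicit Defensive.
Local Open Scope ring_scope.

Section Tensor.
Variables (C : nzRingType) (r' : nat) (x : 'I_r'.+1 -> C) (t : C).

Local Notation T := (@tensorA C r'.+2 x t).
Local Notation nzc := (fun a : 'I_r'.+2 => val a != r'.+1).

Lemma tA_allz (s : seq 'I_r'.+2) : count nzc s = 0%N -> T s = t.
Proof.
move=> h; rewrite /tensorA.
have -> : all (fun c : 'I_r'.+2 => val c == r'.+1) s.
  rewrite -[all _ _]negbK -has_predC has_count.
  by rewrite (eq_count (a2 := nzc)) ?h // => a /=.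
done.
Qed.

Lemma tA_zero (s : seq 'I_r'.+2) : count nzc s != 0%N ->
  (forall i : 'I_r'.+1, count nzc s = 2%N ->
     all (fun a : 'I_r'.+2 => (val a == r'.+1) || (val a == i)) s -> False) ->
  T s = 0.
Proof.
move=> h0 hi; rewrite /tensorA.
have -> : all (fun c : 'I_r'.+2 => val c == r'.+1) s = false.
  apply/negbTE; rewrite -has_predC has_count.
  by rewrite (eq_count (a2 := nzc)) ?lt0n // => a /=.
case: pickP => // i Pi; exfalso; apply: (hi i).
  rewrite -(count_map val (fun k => k != r'.+1)) (permP Pi) /= count_nseq /=. idtac.
  have -> : (val i != r'.+1) by rewrite neq_ltn (ltn_ord i).
  by rewrite eqxx mul0n addn0.
apply/allP => a ain.
have : val a \in (val i :: val i :: nseq (size s - 2) r'.+1).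
  by rewrite -(perm_mem Pi); apply: map_f.
rewrite !inE mem_nseq orbA orbb => /orP[->|/andP[_ ->]]; by rewrite ?orbT.
Qed.

Lemma tA_x (s : seq 'I_r'.+2) (i : 'I_r'.+1) : count nzc s = 2%N ->
  all (fun a : 'I_r'.+2 => (val a == r'.+1) || (val a == i)) s -> T s = x i.
Proof.
move=> h2 hall; rewrite /tensorA.
have -> : all (fun c : 'I_r'.+2 => val c == r'.+1) s = false.
  apply/negbTE; rewrite -has_predC has_count.
  by rewrite (eq_count (a2 := nzc)) ?h2 // => a /=.
set s' := map val s.
have hall' : all (fun k => (k == r'.+1) || (k == i)) s' by rewrite all_map.
have h2' : count (fun k => k != r'.+1) s' = 2%N by rewrite count_map.
have Pi : perm_eq s' (val i :: val i :: nseq (size s - 2) r'.+1).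
  rewrite -(perm_filterC (fun k => k != r'.+1) s').
  have -> : filter (fun k => k != r'.+1) s' = nseq 2 (val i).
    rewrite -h2' -size_filter; apply/all_pred1P; apply/allP => k.
    rewrite mem_filter => /andP[hk ks]; move/allP: hall' => /(_ k ks).
    by rewrite (negbTE hk).
  have -> : filter (predC (fun k => k != r'.+1)) s' = nseq (size s - 2) r'.+1.
    have -> : (size s - 2)%N = size (filter (predC (fun k => k != r'.+1)) s').
      rewrite size_filter -(size_map val s) -/s' -(count_predC (fun k => k != r'.+1) s') h2'.
      by rewrite addKn.
    apply/all_pred1P; apply/allP => k; rewrite mem_filter /= negbK.
    by case/andP.
  by [].
case: pickP => [j Pj|/(_ i) ]; last by rewrite Pi.
congr (x _); apply/val_inj => /=.
have PP := Pj; rewrite (permPl Pi) in PP; move: PP.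
move/perm_mem => /(_ (val j)). rewrite !inE eqxx /= orbA orbb mem_nseq.
case/orP => [/eqP //|/andP[_ /eqP hj]].
by move: (ltn_ord j); rewrite hj ltnn.
Qed.
End Tensor.

Section Graph.
Variables (C : comNzRingType) (r' : nat) (x : 'I_r'.+1 -> C) (t : C).
Variables (n : nat) (H : finType) (vert : H -> 'I_n) (mate : H -> H).
Hypotheses (mate_inv : involutive mate) (mate_nofix : forall h, mate h != h).

Local Notation Col := 'I_r'.+2.
Local Notation T := (@tensorA C r'.+2 x t).

Definition consc (c : {ffun H -> Col}) := [forall h, c h == c (mate h)].

Lemma edge_prod (c : {ffun H -> Col}) :
  \prod_(h | edge_rep mate h) (1%:M : 'M[C]_r'.+2) (c h) (c (mate h)) = (consc c)%:R.
Proof.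
case: (boolP (consc c)) => hc.
  by rewrite big1 // => h _; rewrite mxE (eqP (forallP hc h)) eqxx mulr1n.
have [h hh] : exists h, c h != c (mate h).
  by move/forallPn: hc => [h hh]; exists h.
case rep: (edge_rep mate h).
  by rewrite (bigD1 h) //= mxE (negbTE hh) mulr0n mul0r.
have rep' : edge_rep mate (mate h).
  move: rep; rewrite /edge_rep mate_inv ltnNge => /negbFE.
  rewrite leq_eqVlt => /orP[/eqP E|//].
  by move: (mate_nofix h); rewrite (enum_rank_inj (val_inj E)) eqxx.
rewrite (bigD1 (mate h)) //= mxE mate_inv eq_sym (negbTE hh) mulr0n mul0r.
done.
Qed.

Lemma count_half (p : pred H) v :
  count p (halfedges_at vert v) = #|[set h | (vert h == v) && p h]|.
Proof.
rewrite -sum1_count big_enum_cond /= -sum1_card; apply: eq_bigl => h.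
by rewrite !inE.
Qed.

Definition Sc (c : {ffun H -> Col}) := [set h | val (c h) != r'.+1].

Lemma count_nz (c : {ffun H -> Col}) v :
  count (fun a : Col => val a != r'.+1) (map c (halfedges_at vert v))
  = sub_degree vert (Sc c) v.
Proof.
rewrite count_map count_half /sub_degree; apply: eq_card => h.
by rewrite !inE andbC.
Qed.

Section Comp.
Variable S : {set H}.
Local Notation P := (components vert mate S).
Local Notation sr := (sub_rel vert mate S).

Lemma sub_rel_sym : symmetric sr.
Proof.
move=> a b; rewrite /sub_rel andbCA; congr (_ && (_ && _)); congr (_ || _).
  by apply/eqP/eqP => <-; rewrite mate_inv.
exact: eq_sym.
Qed.

Lemma eqiR : {in S & &, equivalence_rel (connect sr)}.
Proof.
move=> a b c _ _ _; split; first exact: connect0.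
move=> hab; apply/idP/idP => h.
  by apply: connect_trans h; rewrite (sym_connect_sym sub_rel_sym).
exact: connect_trans hab h.
Qed.

Lemma partP : partition P S.
Proof. exact: (equivalence_partitionP eqiR). Qed.

Lemma pblockE a b : a \in S -> b \in S ->
  (b \in pblock P a) = connect sr a b.
Proof. exact: (pblock_equivalence_partition eqiR). Qed.

Lemma coverP : cover P = S.
Proof. by case/and3P: partP => /eqP. Qed.
Lemma trivP : trivIset P.
Proof. by case/and3P: partP. Qed.
Lemma set0P : set0 \notin P.
Proof. by case/and3P: partP. Qed.

Lemma mem_pb h : h \in S -> h \in pblock P h.
Proof. by move=> hS; rewrite mem_pblock coverP. Qed.
Lemma pb_mem h : h \in S -> pblock P h \in P.
Proof. by move=> hS; rewrite pblock_mem ?coverP. Qed.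
Lemma sub_comp K h : K \in P -> h \in K -> h \in S.
Proof. by move=> KP hK; rewrite -coverP; apply/bigcupP; exists K. Qed.
Lemma pb_def K h : K \in P -> h \in K -> pblock P h = K.
Proof. exact: def_pblock trivP. Qed.
Lemma pb_conn a b : a \in S -> b \in S -> connect sr a b -> pblock P a = pblock P b.
Proof.
move=> aS bS hab; have : b \in pblock P a by rewrite pblockE.
by move/(same_pblock trivP).
Qed.
Lemma pb_same a b : a \in S -> b \in S -> sr a b -> pblock P a = pblock P b.
Proof. by move=> aS bS hab; apply: pb_conn => //; apply: connect1. Qed.
End Comp.

Definition W (c : {ffun H -> Col}) :=
  (\prod_(h | edge_rep mate h) (1%:M : 'M[C]_r'.+2) (c h) (c (mate h))) *
  \prod_(v : 'I_n) T (map c (halfedges_at vert v)).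

Definition valid (c : {ffun H -> Col}) := consc c &&
  [forall h, forall h', [&& h \in Sc c, h' \in Sc c & vert h == vert h'] ==> (c h == c h')].

Lemma mem_half h : h \in halfedges_at vert (vert h).
Proof. by rewrite /halfedges_at mem_enum inE. Qed.

Lemma sd_pos (S : {set H}) (h : H) : h \in S -> sub_degree vert S (vert h) != 0%N.
Proof.
by move=> hS; rewrite -lt0n card_gt0; apply/set0Pn; exists h; rewrite inE hS eqxx.
Qed.

Lemma W_zero c : ~~ valid c || ~~ is_cycle vert mate (Sc c) -> W c = 0.
Proof.
rewrite /W edge_prod; case: (boolP (consc c)) => hc; last by rewrite mul0r.
rewrite mul1r; case/orP => [hv | hcyc].
  rewrite /valid hc /= in hv; move/forallPn: hv => [h /forallPn [h']].
  rewrite negb_imply => /andP [/and3P[hS h'S /eqP hv] hne].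
  rewrite (bigD1 (vert h)) //= tA_zero ?mul0r //.
    by rewrite count_nz sd_pos.
  move=> i _ /allP hall.
  have := hall (c h) (map_f c (mem_half h)).
  have := hall (c h') (map_f c (eq_ind _ (fun v => h' \in halfedges_at vert v) (mem_half h') _ (esym hv))).
  move: hS h'S; rewrite !inE => /negbTE -> /negbTE -> /= /eqP e1 /eqP e2.
  by move: hne; rewrite (val_inj (etrans e1 (esym e2))) eqxx.
have mc : mate_closed mate (Sc c).
  apply/forallP => h; apply/implyP; rewrite !inE.
  by rewrite (eqP (forallP hc h)).
move: hcyc; rewrite /is_cycle mc /= => /forallPn [v].
rewrite negb_or => /andP[h0 h2].
rewrite (bigD1 v) //= tA_zero ?mul0r //; first by rewrite count_nz.
by move=> i; rewrite count_nz => /eqP; rewrite (negbTE h2).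
Qed.

Section Cyc.
Variable S : {set H}.
Hypothesis cyc : is_cycle vert mate S.
Local Notation P := (components vert mate S).
Local Notation sr := (sub_rel vert mate S).
Local Notation sd := (sub_degree vert S).

Lemma mcl h : h \in S -> mate h \in S.
Proof. by case/andP: cyc => /forallP /(_ h) /implyP. Qed.

Lemma deg2 v : sd v != 0%N -> sd v = 2%N.
Proof. by case/andP: cyc => _ /forallP /(_ v) /orP[/eqP->|/eqP->]. Qed.

Definition vblock v :=
  if [pick h in S | vert h == v] is Some h0 then pblock P h0 else set0.

Lemma vblockE h : h \in S -> vblock (vert h) = pblock P h.
Proof.
move=> hS; rewrite /vblock; case: pickP => [h0 /andP[h0S /eqP hv]|/(_ h)].
  by apply: pb_same => //; rewrite /sub_rel h0S hS hv eqxx orbT.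
by rewrite hS eqxx.
Qed.

Lemma vblock_mem v : sd v != 0%N -> vblock v \in P.
Proof.
rewrite -lt0n card_gt0 => /set0Pn [h]; rewrite inE => /andP[hS /eqP <-].
by rewrite vblockE // pb_mem.
Qed.

Definition NV K := [set v | (sd v != 0%N) && (vblock v == K)].

Lemma cardK K : K \in P -> #|K| = (#|NV K| * 2)%N.
Proof.
move=> KP; rewrite -sum1_card (partition_big vert predT) //=.
rewrite -sum_nat_const [RHS]big_mkcond /=; apply: eq_bigr => v _.
rewrite sum1dep_card; case: ifP => hv.
  move: hv; rewrite inE => /andP[hv /eqP hK]; rewrite -(deg2 hv).
  apply: eq_card => h; rewrite !inE; apply/andP/andP => [[hK' hv']|[hS hv']].
    by split=> //; apply: sub_comp hK'.
  split=> //; rewrite -hK -(eqP hv') vblockE //; exact: mem_pb.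
apply: eq_card0 => h; rewrite !inE; apply/negP => /andP[hK /eqP hv'].
move: hv; rewrite inE -hv' sd_pos ?(sub_comp KP hK) //=.
by rewrite vblockE ?(sub_comp KP hK) // (pb_def KP hK) eqxx.
Qed.

Lemma nvK K : K \in P -> (#|K| %/ 2)%N = #|NV K|.
Proof. by move=> KP; rewrite cardK // mulnK. Qed.


Definition mk (f : {ffun {set H} -> 'I_r'.+1}) : {ffun H -> Col} :=
  [ffun h => if h \in S then widen_ord (leqnSn _) (f (pblock P h)) else ord_max].
Definition ext (c : {ffun H -> Col}) : {ffun {set H} -> 'I_r'.+1} :=
  [ffun K => if K \in P then
     (if [pick h in K] is Some h0 then inord (c h0) else ord0) else ord0].
Definition pf (f : {ffun {set H} -> 'I_r'.+1}) :=
  [forall K, (K \notin P) ==> (f K == ord0)].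

Lemma Sc_mk f : Sc (mk f) = S.
Proof.
apply/setP => h; rewrite !inE ffunE; case: ifP => hS /=; last by rewrite eqxx.
by rewrite neq_ltn ltn_ord.
Qed.

Lemma sr_mate h : h \in S -> sr h (mate h).
Proof. by move=> hS; rewrite /sub_rel hS mcl // eqxx. Qed.

Lemma mateS h : (mate h \in S) = (h \in S).
Proof. by apply/idP/idP => [/mcl|/mcl //]; rewrite mate_inv. Qed.

Lemma valid_mk f : valid (mk f).
Proof.
apply/andP; split.
  apply/forallP => h; rewrite !ffunE mateS; case: ifP => hS //.
  by rewrite (pb_same hS (mcl hS) (sr_mate hS)).
apply/forallP => h; apply/forallP => h'; apply/implyP.
rewrite Sc_mk => /and3P[hS h'S hv].
by rewrite !ffunE hS h'S (pb_same hS h'S) // /sub_rel hS h'S hv orbT.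
Qed.

Lemma ext_mk f : pf f -> ext (mk f) = f.
Proof.
move=> hf; apply/ffunP => K; rewrite ffunE; case: ifP => KP; last first.
  by move/forallP: hf => /(_ K); rewrite KP /= => /eqP.
case: pickP => [h0 h0K|K0]; last first.
  have E : K = set0 by apply/setP => h; rewrite inE K0.
  by move: (set0P S); rewrite -E KP.
have h0S := sub_comp KP h0K.
rewrite ffunE h0S (pb_def KP h0K); apply: val_inj; rewrite /= inordK //.
Qed.

Lemma conn_col c : valid c -> forall a b,
  connect (sub_rel vert mate (Sc c)) a b -> c a = c b.
Proof.
move=> /andP[hc hv] a b /connectP [p]; elim: p a => [|y p IH] a /=.
  by move=> _ ->.
move=> /andP[hay hp] hb; rewrite -(IH y hp hb).
move: hay; rewrite /sub_rel => /and3P[aS yS /orP[/eqP <-|hvy]].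
  exact: (eqP (forallP hc a)).
by apply/eqP; move/forallP: hv => /(_ a) /forallP /(_ y) /implyP; apply; rewrite aS yS.
Qed.

Lemma mk_ext c : Sc c = S -> valid c -> mk (ext c) = c.
Proof.
move=> hS hv; apply/ffunP => h; rewrite !ffunE; case: ifP => hS'.
  rewrite pb_mem //; case: pickP => [h0 h0K|/(_ h)]; last by rewrite mem_pb.
  have h0S : h0 \in S by apply: sub_comp (pb_mem hS') h0K.
  have e : c h0 = c h.
    apply: (conn_col hv); rewrite hS (sym_connect_sym (sub_rel_sym S)).
    by rewrite -pblockE.
  apply: val_inj; rewrite /= e inordK //.
  have := ltn_ord (c h); rewrite ltnS leq_eqVlt; case/orP => [/eqP E|//].
  by move: hS'; rewrite -hS inE /= E eqxx.
apply: val_inj => /=; move: hS'; rewrite -hS inE => /negbFE /eqP -> //.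
Qed.

Lemma pf_equiv f : ((Sc (mk f) == S) && valid (mk f)) && (ext (mk f) == f) = pf f.
Proof.
apply/idP/idP => [/andP[_ /eqP <-]|hf].
  by apply/forallP => K; apply/implyP => KP; rewrite ffunE (negbTE KP).
by rewrite Sc_mk eqxx valid_mk (ext_mk hf) eqxx.
Qed.

Lemma W_mk f : W (mk f) =
  t ^+ #|[set v | sd v == 0%N]| * \prod_(K in P) x (f K) ^+ (#|K| %/ 2).
Proof.
have /andP[hc _] := valid_mk f.
rewrite /W edge_prod hc mul1r.
rewrite (eq_bigr (fun v => if sd v == 0%N then t else x (f (vblock v)))); last first.
  move=> v _; case: ifP => h0.
    by apply: tA_allz; rewrite count_nz Sc_mk (eqP h0).
  apply: tA_x; first by rewrite count_nz Sc_mk deg2 ?h0.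
  apply/allP => a /mapP [h hin ->]; rewrite ffunE; case: ifP => hS /=; last by rewrite eqxx.
  by move: hin; rewrite /halfedges_at mem_enum inE => /eqP <-; rewrite vblockE // eqxx orbT.
rewrite (bigID (fun v => sd v == 0%N)) /=; congr (_ * _).
  rewrite -prodr_const; apply: eq_big => v; first by rewrite inE.
  by move=> ->.
rewrite (partition_big vblock (fun K => K \in P)) /=; last by move=> v; apply: vblock_mem.
apply: eq_bigr => K KP; rewrite nvK // -prodr_const.
apply: eq_big => v; first by rewrite inE.
by case/andP => /negbTE -> /eqP ->.
Qed.

Lemma sum_cycle0 : \sum_(c | Sc c == S) W c =
  t ^+ #|[set v | sd v == 0%N]| * \prod_(K in P) \sum_(i < r'.+1) x i ^+ (#|K| %/ 2).
Proof.
rewrite (bigID valid) /= [X in _ + X]big1 ?addr0; last first.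
  by move=> c /andP[_ hv]; apply: W_zero; rewrite hv.
rewrite (reindex_onto mk ext) /=; last by move=> c /andP[/eqP hS hv]; apply: mk_ext.
rewrite (eq_bigl pf); last by move=> f; rewrite pf_equiv.
rewrite (eq_bigr _ (fun f _ => W_mk f)) -mulr_sumr; congr (_ * _).
rewrite (big_distr_big_dep ord0) /=; apply: eq_bigl => f.
rewrite /pf; apply/forallP/familyP => hf K; move: (hf K); rewrite /= ?inE.
  by have -> : (K \in in_mem^~ (mem P)) = (K \in P) by []; case: (K \in P) => //= /eqP ->; rewrite inE.
by have -> : (K \in in_mem^~ (mem P)) = (K \in P) by []; case: (K \in P) => //=; rewrite inE.
Qed.


Local Notation ty := (cycle_type vert mate S).

Lemma perm_ty : perm_eq ty [seq (#|K| %/ 2)%N | K : {set H} <- enum P].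
Proof. by rewrite /cycle_type perm_sort. Qed.

Lemma sumn_type : sumn ty = #|[set v | sd v != 0%N]|.
Proof.
rewrite (perm_sumn perm_ty) sumnE big_map big_enum /=.
rewrite -sum1_card (partition_big vblock (fun K => K \in P)) /=; last first.
  by move=> v; rewrite inE; apply: vblock_mem.
apply: eq_bigr => K KP; rewrite nvK // sum1dep_card; apply: eq_card => v.
by rewrite !inE.
Qed.

Lemma zero_card : #|[set v | sd v == 0%N]| = (n - sumn ty)%N.
Proof.
have E := cardsC [set v | sd v == 0%N]; rewrite card_ord in E.
have E2 : #|~: [set v | sd v == 0%N]| = #|[set v | sd v != 0%N]|.
  by apply: eq_card => v; rewrite !inE.
rewrite sumn_type -E2; move: E; move: (#|[set v | sd v == 0%N]|) (#|~: [set v | sd v == 0%N]|) => a b.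
by move=> <-; rewrite addnK.
Qed.

Lemma pprod_type : pprod x ty = \prod_(K in P) \sum_(i < r'.+1) x i ^+ (#|K| %/ 2).
Proof. by rewrite /pprod (perm_big _ perm_ty) big_map big_enum. Qed.

Lemma sum_cycle : \sum_(c | Sc c == S) W c = t ^+ (n - sumn ty) * pprod x ty.
Proof. by rewrite sum_cycle0 zero_card pprod_type. Qed.

Lemma ty_sorted : sorted geq ty.
Proof. apply: sort_sorted => a b; exact: leq_total. Qed.

Lemma ty_pos : all (fun k => k != 0%N) ty.
Proof.
apply/allP => k; rewrite (perm_mem perm_ty) => /mapP [K]; rewrite mem_enum => KP ->.
rewrite nvK // -lt0n card_gt0; apply/set0Pn.
have [h hK] : exists h, h \in K.
  have : K != set0 by apply/negP => /eqP E; move: (set0P S); rewrite -E KP.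
  by case/set0Pn => h hK; exists h.
have hS := sub_comp KP hK.
by exists (vert h); rewrite inE sd_pos // vblockE // (pb_def KP hK) eqxx.
Qed.

Lemma ty_le : (sumn ty <= n)%N.
Proof. by rewrite sumn_type -[X in (_ <= X)%N]card_ord max_card. Qed.

End Cyc.
End Graph.
Lemma sorted_split (s : seq nat) : sorted geq s ->
  s = filter (fun k => k != 0%N) s ++ nseq (count (predC (fun k => k != 0%N)) s) 0%N.
Proof.
elim: s => //= a s IH hs.
have hs' := path_sorted hs.
case: (eqVneq a 0%N) => [a0 | an0] /=.
  subst a.
  have hall := order_path_min (fun a b c (h1 : (a <= b)%N) (h2 : (c <= a)%N) => leq_trans h2 h1) hs.
  have E : s = nseq (size s) 0%N.
    apply/all_pred1P; apply/allP => k /(allP hall); by rewrite /= leqn0.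
  by rewrite E filter_nseq count_nseq /= mul1n add0n.
by rewrite add0n; congr (_ :: _); exact: IH.
Qed.

Lemma path_nseq0 k a : path geq a (nseq k 0%N).
Proof. by elim: k a => //= k IH a; rewrite IH. Qed.

Lemma path_cat_nseq k a l : path geq a l -> path geq a (l ++ nseq k 0%N).
Proof.
elim: l a => [|b l IH] a /=; first by move=> _; apply: path_nseq0.
by case/andP => hab hp; rewrite hab IH.
Qed.

Lemma sorted_cat_nseq k l : sorted geq l -> sorted geq (l ++ nseq k 0%N).
Proof.
case: l => [|a l] /=; last exact: path_cat_nseq.
by case: k => //= k _; apply: path_nseq0.
Qed.

Lemma size_le_sumn l : all (fun k => k != 0%N) l -> (size l <= sumn l)%N.
Proof.
elim: l => //= a l IH /andP[ha hl].
by rewrite -add1n leq_add // ?lt0n // IH.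
Qed.

Lemma le_sumn l k : k \in l -> (k <= sumn l)%N.
Proof.
elim: l => //= a l IH; rewrite inE => /orP[/eqP ->|kl]; first exact: leq_addr.
by apply: leq_trans (IH kl) _; apply: leq_addl.
Qed.

Lemma padded_uniq (n : nat) (l : seq nat) : sorted geq l ->
  all (fun k => k != 0%N) l -> (sumn l <= n)%N ->
  exists lam0 : n.-tuple 'I_n.+1, forall lam,
    (padded_partition lam && (part_of lam == l)) = (lam == lam0).
Proof.
move=> hs hpos hsum.
have hsz : (size l <= n)%N := leq_trans (size_le_sumn hpos) hsum.
pose L := l ++ nseq (n - size l) 0%N.
have sL : size L = n by rewrite size_cat size_nseq subnKC.
have leL k : k \in L -> (k <= n)%N.
  rewrite mem_cat mem_nseq => /orP[/le_sumn h|/andP[_ /eqP ->//]].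
  exact: leq_trans h hsum.
pose lam0 := [tuple (inord (nth 0%N L i) : 'I_n.+1) | i < n].
have vL : [seq val i | i <- lam0] = L.
  have -> : val lam0 = map (fun i : 'I_n => (inord (nth 0%N L i) : 'I_n.+1)) (enum 'I_n).
    by [].
  rewrite -map_comp.
  rewrite (eq_map (g := fun i : 'I_n => nth 0%N L i)); last first.
    move=> i /=; rewrite inordK // ltnS; apply: leL; apply: mem_nth.
    by rewrite sL.
  rewrite (map_comp (nth 0%N L) val) val_enum_ord.
  by rewrite -{2}(mkseq_nth 0%N L) sL.
exists lam0 => lam; apply/idP/idP.
  case/andP => /andP[hs' _] /eqP hp; apply/eqP; apply: val_inj.
  apply: (inj_map val_inj); rewrite vL (sorted_split hs') /L.
  rewrite /part_of in hp; rewrite hp; congr (_ ++ nseq _ _).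
  have := count_predC (fun k => k != 0%N) [seq val i | i <- lam].
  rewrite -size_filter hp size_map size_tuple => E.
  by rewrite -[in RHS]E addKn.
move/eqP ->; rewrite /padded_partition /part_of vL.
rewrite sorted_cat_nseq // sumn_cat sumn_nseq mul0n addn0 hsum /=.
by rewrite /L filter_cat filter_nseq /= cats0 (all_filterP hpos).
Qed.

From mathcomp Require Import reals complex.
Local Open Scope ring_scope.
Local Open Scope complex_scope.

Theorem theorem2 (R : realType) (r : nat) (hr : (2 <= r)%N)
  (x : 'I_r.-1 -> R[i]) (t : R[i])
  (n : nat) (H : finType) (vert : H -> 'I_n) (mate : H -> H)
  (mate_inv : involutive mate) (mate_nofix : forall h, mate h != h)
  (deg_pos : forall v : 'I_n, (1 <= degree vert v)%N) :
  graphF vert mate (tensorA x t) (fun i j => (1%:M : 'M[R[i]]_r) i j) =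
  \sum_(lam : n.-tuple 'I_n.+1 | padded_partition lam)
     t ^+ (n - sumn (part_of lam)) * pprod x (part_of lam)
       * (N_type vert mate (part_of lam))%:R.
Proof.
case: r hr x => [|[|r']] // hr x.
have -> : graphF vert mate (tensorA x t) (fun i j => (1%:M : 'M[R[i]]_r'.+2) i j)
  = \sum_(c : {ffun H -> 'I_r'.+2}) W x t vert mate c by [].
rewrite (partition_big (fun c => Sc c) predT) //=.
rewrite (bigID (is_cycle vert mate)) /= [X in _ + X]big1 ?addr0; last first.
  move=> S hS; apply: big1 => c /eqP hc; rewrite W_zero //.
  by rewrite hc hS orbT.
transitivity (\sum_(S | is_cycle vert mate S)
   (t ^+ (n - sumn (cycle_type vert mate S)) * pprod x (cycle_type vert mate S))).
  by apply: eq_bigr => S hS; rewrite sum_cycle.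
symmetry.
rewrite (eq_bigr (fun lam => \sum_(S | is_cycle vert mate S &&
     (cycle_type vert mate S == part_of lam))
     (t ^+ (n - sumn (cycle_type vert mate S)) * pprod x (cycle_type vert mate S)))); last first.
  move=> lam _; rewrite mulr_natr -sumr_const; apply: eq_big => S; first by rewrite inE.
  by rewrite inE => /andP[_ /eqP ->].
rewrite (exchange_big_dep (is_cycle vert mate)) /=; last by move=> lam S _ /andP[].
apply: eq_bigr => S hS.
have [lam0 hl] := padded_uniq (ty_sorted vert mate S) (ty_pos mate_inv hS) (ty_le mate_inv hS).
rewrite (big_pred1 lam0) // => lam /=; rewrite hS /= eq_sym; exact: hl.
Qed.
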